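(* Let $\Lambda$ be any of the logics $K$, $T$, $K4$, $K5$, $S4$, $S5$. A formula $\varphi$ of the language $\mathcal{L}_{\Box\ddagger}$ (formulas built from $\top$, atoms, $\lnot$, $\land$, $\Box$ and $[\ddagger\pi]$ for propositional $\pi$) is true at every world of every $\Lambda$-model if and only if it is derivable in the proof system $\Lambda+\mathrm{Ax}$ described below (derivations may use formulas of the larger language $\mathcal{L}^{+}$).
   Context: Fix a countable non-empty set $\mathit{At}$ of atoms. A literal is an atom or its negation; a clause is a finite set $D$ of literals read as $\bigvee D$ ($\bigvee\varnothing:=\bot$); it is tautological if it contains $p$ and $\lnot p$ for some $p$. For propositional $\pi$, $\mathcal{C}(\pi)$ is the set of non-tautological clauses $D$ with $\models\pi\to\bigvee D$ and no $D'\subsetneq D$ with $\models\pi\to\bigvee D'$. Language $\mathcal{L}^{+}$ extends $\mathcal{L}_{\Box\ddagger}$ with operators $[D_1,D_2]_i$ for $i\in\{0,1,2\}$ and any finite non-tautological clauses $D_1,D_2$. Models: $\mathcal{M}=\langle W,R,V\rangle$, $W\neq\varnothing$, $R\subseteq W\times W$, $V:\mathit{At}\to\mathcal{P}(W)$, standard semantics for atoms, Booleans and $\Box$. For finite non-tautological clauses $D_1,D_2$, $\mathcal{M}^{(D_1,D_2)}=\langle W',R',V'\rangle$ has $W'=W\times\{0,1,2\}$, $(w,i)R'(v,j)$ iff $wRv$, $(w,0)\in V'(p)$ iff $w\in V(p)$, and for $i\in\{1,2\}$: $(w,i)\in V'(p)$ iff $\lnot p\in D_i$, or $\{p,\lnot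 p\}\cap D_i=\varnothing$ and $w\in V(p)$. Semantics: $\mathcal{M},w\models[D_1,D_2]_i\varphi$ iff $\mathcal{M}^{(D_1,D_2)},(w,i)\models\varphi$; $\mathcal{M},w\models[\ddagger\pi]\varphi$ iff for all $D_1\in\mathcal{C}(\pi)$, $D_2\in\mathcal{C}(\lnot\pi)$, $\mathcal{M}^{(D_1,D_2)},(w,0)\models\varphi$. $\Lambda$-models: $K$ all; $T$ reflexive; $K4$ transitive; $K5$ euclidean; $S4$ reflexive transitive; $S5$ equivalence relations. Proof system $\Lambda$ over $\mathcal{L}^{+}$: all $\mathcal{L}^{+}$-instances of propositional tautologies, $\Box(\varphi\to\psi)\to(\Box\varphi\to\Box\psi)$, modus ponens, necessitation, plus $\Box\varphi\to\varphi$ (for $T,S4,S5$), $\Box\varphi\to\Box\Box\varphi$ (for $K4,S4,S5$), $\lnot\Box\varphi\to\Box\lnot\Box\varphi$ (for $K5,S5$). $\mathrm{Ax}$, for all propositional $\pi$, finite non-tautological $D_1,D_2$, atoms $p$, formulas $\varphi,\psi$, with $[\,\cdot\,]$ ranging over $[D_1,D_2]_0,[D_1,D_2]_1,[D_1,D_2]_2$: (1) $[\ddagger\pi]\varphi\leftrightarrow\bigwedge_{D_1\in\mathcal{C}(\pi)}\bigwedge_{D_2\in\mathcal{C}(\lnot\pi)}[D_1,D_2]_0\varphi$; (2) $[D_1,D_2]_0p\leftrightarrow p$; (3) for $j\in\{1,2\}$: $[D_1,D_2]_jp\leftrightarrow p$ if $\{p,\lnot p\}\cap D_j=\varnothing$;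 $\leftrightarrow\top$ if $\lnot p\in D_j$; $\leftrightarrow\bot$ if $p\in D_j$; (4) $[\,\cdot\,]\lnot\varphi\leftrightarrow\lnot[\,\cdot\,]\varphi$; (5) $[\,\cdot\,](\varphi\land\psi)\leftrightarrow([\,\cdot\,]\varphi\land[\,\cdot\,]\psi)$; (6) $[\,\cdot\,]\Box\varphi\leftrightarrow\Box([D_1,D_2]_0\varphi\land[D_1,D_2]_1\varphi\land[D_1,D_2]_2\varphi)$; (7) $[\,\cdot\,](\varphi\to\psi)\to([\,\cdot\,]\varphi\to[\,\cdot\,]\psi)$; (8) rule: from $\vdash\varphi$ infer $\vdash[\,\cdot\,]\varphi$. *)

(* Defs.v *)
From HB Require Import structures.
From mathcomp Require Import all_boot finmap.

Set Implicit Arguments.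
Unset Strict Implicit.
Unset Printing Implicit Defensive.

Local Open Scope fset_scope.

Inductive pf (X : Type) : Type :=
| PTop : pf X
| PVar : X -> pf X
| PNeg : pf X -> pf X
| PAnd : pf X -> pf X -> pf X.
Arguments PTop {X}.

Fixpoint peval (X : Type) (v : X -> bool) (a : pf X) : bool :=
  match a with
  | PTop => true
  | PVar x => v x
  | PNeg b => ~~ peval v b
  | PAnd b c => peval v b && peval v c
  end.

(* ---------- Literals and clauses over atoms A ----------
   A literal is a pair (p, b): (p, true) is the atom p, (p, false) is ~p.
   A clause is a finite set of literals, read as a disjunction. *)
Definition nontaut (A : choiceType) (D : {fset A * bool}) : bool :=
  all (fun l : A * bool => (l.1, ~~ l.2) \notin D) D.

Definition clause (A : choiceType) := {D : {fset A * bool} | nontaut D}.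

Definition litv (A : Type) (v : A -> bool) (l : A * bool) : bool := v l.1 == l.2.

Definition entails (A : choiceType) (pi : pf A) (D : {fset A * bool}) : Prop :=
  forall v : A -> bool, peval v pi -> exists2 l, l \in D & litv v l.

Definition Cset (A : choiceType) (pi : pf A) (D : clause A) : Prop :=
  entails pi (val D) /\
  forall D' : {fset A * bool}, D' `<` val D -> ~ entails pi D'.

Inductive upd : Type := U0 | U1 | U2.

Inductive form (A : choiceType) : Type :=
| FTop : form A
| FAtom : A -> form A
| FNeg : form A -> form A
| FAnd : form A -> form A -> form A
| FBox : form A -> form A
| FDag : pf A -> form A -> form A
| FUpd : clause A -> clause A -> upd -> form A -> form A.
Arguments FTop {A}.

Definition FBot (A : choiceType) : form A := FNeg FTop.
Arguments FBot {A}.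
Definition FImp (A : choiceType) (f g : form A) : form A := FNeg (FAnd f (FNeg g)).
Definition FIff (A : choiceType) (f g : form A) : form A := FAnd (FImp f g) (FImp g f).
Definition bigAnd (A : choiceType) (l : seq (form A)) : form A := foldr (@FAnd A) FTop l.

Fixpoint no_upd (A : choiceType) (f : form A) : bool :=
  match f with
  | FTop | FAtom _ => true
  | FNeg g | FBox g | FDag _ g => no_upd g
  | FAnd g h => no_upd g && no_upd h
  | FUpd _ _ _ _ => false
  end.

Definition upd_rel (W : Type) (R : W -> W -> Prop) : W * upd -> W * upd -> Prop :=
  fun x y => R x.1 y.1.

Definition upd_lit (A : choiceType) (W : Type) (D : clause A) (V : A -> W -> Prop)
  (p : A) (w : W) : Prop :=
  (p, false) \in val D \/ ((p, true) \notin val D /\ (p, false) \notin val D /\ V p w).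

Definition upd_val (A : choiceType) (W : Type) (D1 D2 : clause A)
  (V : A -> W -> Prop) : A -> W * upd -> Prop :=
  fun p x => match x.2 with
             | U0 => V p x.1
             | U1 => upd_lit D1 V p x.1
             | U2 => upd_lit D2 V p x.1
             end.

Fixpoint sat (A : choiceType) (W : Type) (R : W -> W -> Prop) (V : A -> W -> Prop)
  (w : W) (f : form A) {struct f} : Prop :=
  match f with
  | FTop => True
  | FAtom p => V p w
  | FNeg g => ~ sat R V w g
  | FAnd g h => sat R V w g /\ sat R V w h
  | FBox g => forall u, R w u -> sat R V u g
  | FDag pi g => forall D1 D2 : clause A, Cset pi D1 -> Cset (PNeg pi) D2 ->
                   sat (upd_rel R) (upd_val D1 D2 V) (w, U0) g
  | FUpd D1 D2 i g => sat (upd_rel R) (upd_val D1 D2 V) (w, i) g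
  end.

Inductive logic : Type := LK | LT | LK4 | LK5 | LS4 | LS5.

Definition hasT (L : logic) : bool :=
  match L with LT | LS4 | LS5 => true | _ => false end.
Definition has4 (L : logic) : bool :=
  match L with LK4 | LS4 | LS5 => true | _ => false end.
Definition has5 (L : logic) : bool :=
  match L with LK5 | LS5 => true | _ => false end.

Definition reflexive_R (W : Type) (R : W -> W -> Prop) := forall w, R w w.
Definition transitive_R (W : Type) (R : W -> W -> Prop) :=
  forall u v w, R u v -> R v w -> R u w.
Definition euclidean_R (W : Type) (R : W -> W -> Prop) :=
  forall u v w, R u v -> R u w -> R v w.
Definition symmetric_R (W : Type) (R : W -> W -> Prop) := forall u v, R u v -> R v u.

Definition frame (L : logic) (W : Type) (R : W -> W -> Prop) : Prop :=
  match L with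
  | LK => True
  | LT => reflexive_R R
  | LK4 => transitive_R R
  | LK5 => euclidean_R R
  | LS4 => reflexive_R R /\ transitive_R R
  | LS5 => reflexive_R R /\ symmetric_R R /\ transitive_R R
  end.

Definition valid (A : choiceType) (L : logic) (f : form A) : Prop :=
  forall (W : Type) (R : W -> W -> Prop) (V : A -> W -> Prop),
    inhabited W -> frame L R -> forall w : W, sat R V w f.

Fixpoint subst (A : choiceType) (s : nat -> form A) (t : pf nat) : form A :=
  match t with
  | PTop => FTop
  | PVar n => s n
  | PNeg b => FNeg (subst s b)
  | PAnd b c => FAnd (subst s b) (subst s c)
  end.

Inductive prv (A : choiceType) (L : logic) : form A -> Prop :=
| ax_taut (t : pf nat) (s : nat -> form A) :
    (forall v : nat -> bool, peval v t) -> prv L (subst s t)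
| ax_K f g : prv L (FImp (FBox (FImp f g)) (FImp (FBox f) (FBox g)))
| ax_T f : hasT L -> prv L (FImp (FBox f) f)
| ax_4 f : has4 L -> prv L (FImp (FBox f) (FBox (FBox f)))
| ax_5 f : has5 L -> prv L (FImp (FNeg (FBox f)) (FBox (FNeg (FBox f))))
| r_mp f g : prv L (FImp f g) -> prv L f -> prv L g
| r_nec f : prv L f -> prv L (FBox f)
| ax1 (pi : pf A) f (L1 L2 : seq (clause A)) :
    (forall D, D \in L1 <-> Cset pi D) ->
    (forall D, D \in L2 <-> Cset (PNeg pi) D) ->
    prv L (FIff (FDag pi f)
              (bigAnd [seq bigAnd [seq FUpd D1 D2 U0 f | D2 <- L2] | D1 <- L1]))
| ax2 D1 D2 p : prv L (FIff (FUpd D1 D2 U0 (FAtom p)) (FAtom p))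
| ax3_keep D1 D2 j D p :
    (j = U1 /\ D = D1) \/ (j = U2 /\ D = D2) ->
    (p, true) \notin val D -> (p, false) \notin val D ->
    prv L (FIff (FUpd D1 D2 j (FAtom p)) (FAtom p))
| ax3_top D1 D2 j D p :
    (j = U1 /\ D = D1) \/ (j = U2 /\ D = D2) ->
    (p, false) \in val D ->
    prv L (FIff (FUpd D1 D2 j (FAtom p)) FTop)
| ax3_bot D1 D2 j D p :
    (j = U1 /\ D = D1) \/ (j = U2 /\ D = D2) ->
    (p, true) \in val D ->
    prv L (FIff (FUpd D1 D2 j (FAtom p)) FBot)
| ax4 D1 D2 i f : prv L (FIff (FUpd D1 D2 i (FNeg f)) (FNeg (FUpd D1 D2 i f)))
| ax5 D1 D2 i f g :
    prv L (FIff (FUpd D1 D2 i (FAnd f g)) (FAnd (FUpd D1 D2 i f) (FUpd D1 D2 i g)))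
| ax6 D1 D2 i f :
    prv L (FIff (FUpd D1 D2 i (FBox f))
              (FBox (FAnd (FUpd D1 D2 U0 f) (FAnd (FUpd D1 D2 U1 f) (FUpd D1 D2 U2 f)))))
| ax7 D1 D2 i f g :
    prv L (FImp (FUpd D1 D2 i (FImp f g)) (FImp (FUpd D1 D2 i f) (FUpd D1 D2 i g)))
| r8 D1 D2 i f : prv L f -> prv L (FUpd D1 D2 i f).

(* Main.v *)
Require Import Defs.
From mathcomp Require Import all_boot finmap.
From Stdlib Require Import Classical ClassicalDescription.

Set Implicit Arguments.
Unset Strict Implicit.
Unset Printing Implicit Defensive.

Definition PImp (a b : pf nat) : pf nat := PNeg (PAnd a (PNeg b)).
Definition PIff (a b : pf nat) : pf nat := PAnd (PImp a b) (PImp b a).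
Notation P0 := (PVar 0).
Notation P1 := (PVar 1).
Notation P2 := (PVar 2).
Notation P3 := (PVar 3).
Notation P4 := (PVar 4).

Section Hilbert.
Variable A : choiceType.
Variable L : logic.
Implicit Types f g h : form A.

Lemma taut (t : pf nat) (l : seq (form A)) :
  (forall v, peval v t) -> prv L (subst (fun n => nth FTop l n) t).
Proof. exact: ax_taut. Qed.

Ltac tcheck := let v := fresh "v" in intro v; simpl; destruct (v 0), (v 1), (v 2), (v 3), (v 4); reflexivity.
Ltac tt l t := exact (@taut t l ltac:(tcheck)).

Lemma mp2 f g h : prv L (FImp f (FImp g h)) -> prv L f -> prv L g -> prv L h.
Proof. move=> H1 H2 H3; exact: (r_mp (r_mp H1 H2) H3). Qed.

Lemma imp_trans f g h : prv L (FImp f g) -> prv L (FImp g h) -> prv L (FImp f h).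
Proof. apply: mp2; tt [:: f; g; h] (PImp (PImp P0 P1) (PImp (PImp P1 P2) (PImp P0 P2))). Qed.

Lemma iff_intro f g : prv L (FImp f g) -> prv L (FImp g f) -> prv L (FIff f g).
Proof. apply: mp2; tt [:: f; g] (PImp (PImp P0 P1) (PImp (PImp P1 P0) (PIff P0 P1))). Qed.

Lemma iff_l f g : prv L (FIff f g) -> prv L (FImp f g).
Proof. apply: r_mp; tt [:: f; g] (PImp (PIff P0 P1) (PImp P0 P1)). Qed.

Lemma iff_r f g : prv L (FIff f g) -> prv L (FImp g f).
Proof. apply: r_mp; tt [:: f; g] (PImp (PIff P0 P1) (PImp P1 P0)). Qed.

Lemma imp_refl f : prv L (FImp f f).
Proof. tt [:: f] (PImp P0 P0). Qed.

Lemma iff_refl f : prv L (FIff f f).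
Proof. by apply: iff_intro; apply: imp_refl. Qed.

Lemma iff_sym f g : prv L (FIff f g) -> prv L (FIff g f).
Proof. by move=> H; apply: iff_intro; [apply: iff_r H | apply: iff_l H]. Qed.

Lemma iff_trans f g h : prv L (FIff f g) -> prv L (FIff g h) -> prv L (FIff f h).
Proof.
move=> H1 H2; apply: iff_intro; apply: imp_trans.
- exact: iff_l H1. - exact: iff_l H2. - exact: iff_r H2. - exact: iff_r H1.
Qed.

Lemma iff_neg f g : prv L (FIff f g) -> prv L (FIff (FNeg f) (FNeg g)).
Proof. apply: r_mp; tt [:: f; g] (PImp (PIff P0 P1) (PIff (PNeg P0) (PNeg P1))). Qed.

Lemma iff_and f g f' g' : prv L (FIff f g) -> prv L (FIff f' g') ->
  prv L (FIff (FAnd f f') (FAnd g g')).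
Proof. apply: mp2; tt [:: f; g; f'; g']
  (PImp (PIff P0 P1) (PImp (PIff P2 P3) (PIff (PAnd P0 P2) (PAnd P1 P3)))). Qed.

Lemma box_imp f g : prv L (FImp f g) -> prv L (FImp (FBox f) (FBox g)).
Proof. move=> H; apply: r_mp (ax_K _ _ _) (r_nec H). Qed.

Lemma iff_box f g : prv L (FIff f g) -> prv L (FIff (FBox f) (FBox g)).
Proof.
move=> H; apply: iff_intro; apply: box_imp; [exact: iff_l H | exact: iff_r H].
Qed.

Lemma upd_imp D1 D2 i f g : prv L (FImp f g) -> prv L (FImp (FUpd D1 D2 i f) (FUpd D1 D2 i g)).
Proof. move=> H; apply: r_mp (ax7 _ _ _ _ _ _) (r8 _ _ _ H). Qed.

Lemma iff_upd D1 D2 i f g : prv L (FIff f g) -> prv L (FIff (FUpd D1 D2 i f) (FUpd D1 D2 i g)).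
Proof.
move=> H; apply: iff_intro; apply: upd_imp; [exact: iff_l H | exact: iff_r H].
Qed.

End Hilbert.

Definition bv (P : Prop) : bool := if excluded_middle_informative P then true else false.
Lemma bvP P : bv P <-> P.
Proof. by rewrite /bv; case: excluded_middle_informative. Qed.

Section Sound.
Variable A : choiceType.
Implicit Types f g h : form A.

Lemma sat_imp W R V (w : W) f g : sat R V w (FImp f g) <-> (sat R V w f -> sat R V w g).
Proof. rewrite /=; split; [move=> H Hf; apply: NNPP => Hg; exact: H | tauto]. Qed.

Lemma sat_iff W R V (w : W) f g : sat R V w (FIff f g) <-> (sat R V w f <-> sat R V w g).
Proof. have := sat_imp R V w f g; have := sat_imp R V w g f; rewrite /FIff /=; tauto. Qed.

Lemma sat_subst W R V (w : W) (s : nat -> form A) t :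
  sat R V w (subst s t) <-> peval (fun n => bv (sat R V w (s n))) t.
Proof.
elim: t => [|n|t IH|t1 IH1 t2 IH2] /=.
- by [].
- by rewrite bvP.
- rewrite IH; by case: (peval _ t); split=> // H; exfalso; apply: H.
- rewrite IH1 IH2; exact: (rwP andP).
Qed.

Lemma sat_bigAnd W R V (w : W) (T : eqType) (F : T -> form A) (l : seq T) :
  sat R V w (bigAnd (map F l)) <-> forall x, x \in l -> sat R V w (F x).
Proof.
elim: l => [|x l IH] /=; first by split.
rewrite IH; split.
- move=> [H1 H2] y; rewrite in_cons => /orP [/eqP -> //|]; exact: H2.
- move=> H; split; first by apply: H; rewrite mem_head.
  by move=> y Hy; apply: H; rewrite in_cons Hy orbT.
Qed.

Lemma frame_upd (L : logic) W (R : W -> W -> Prop) : frame L R -> frame L (upd_rel R).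
Proof.
rewrite /upd_rel /reflexive_R /transitive_R /euclidean_R /symmetric_R.
case: L => /=; try tauto.
- by move=> H x; apply: H.
- by move=> H x y z; apply: H.
- by move=> H x y z; apply: H.
- by move=> [H1 H2]; split => [x|x y z]; [apply: H1 | apply: H2].
- move=> [H1 [H2 H3]]; split; [|split] => [x|x y|x y z]; [apply: H1|apply: H2|apply: H3].
Qed.

Lemma frame_refl L W (R : W -> W -> Prop) : hasT L -> frame L R -> reflexive_R R.
Proof. by case: L => //= _ => [[]|[]]. Qed.

Lemma frame_trans L W (R : W -> W -> Prop) : has4 L -> frame L R -> transitive_R R.
Proof. by case: L => //= _ => [[]|[_ []]]. Qed.

Lemma frame_eucl L W (R : W -> W -> Prop) : has5 L -> frame L R -> euclidean_R R.
Proof.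
case: L => //= _ [H1 [H2 H3]] u v w Huv Huw; apply: H3 (H2 _ _ Huv) Huw.
Qed.

Lemma nontaut_neg (D : clause A) p b : (p, b) \in val D -> (p, ~~ b) \notin val D.
Proof. case: D => D /= /allP H /H //. Qed.

Lemma soundness L f : prv L f -> valid L f.
Proof.
elim=> {f}.
- move=> t s Ht W R V _ _ w; apply/sat_subst; exact: Ht.
- move=> f g W R V _ _ w; rewrite !sat_imp => H1 H2 u Hu.
  have H3 : sat R V u (FImp f g) := H1 u Hu.
  by move: H3; rewrite sat_imp; apply; apply: H2.
- move=> f HT W R V _ HF w; rewrite sat_imp /=; apply; exact: frame_refl HT HF w.
- move=> f H4 W R V _ HF w; rewrite sat_imp /= => H u Hu v Hv; apply: H.
  exact: frame_trans H4 HF _ _ _ Hu Hv.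
- move=> f H5 W R V _ HF w; rewrite sat_imp /= => H u Hu Hu'; apply: H => v Hv.
  apply: Hu'; exact: frame_eucl H5 HF _ _ _ Hu Hv.
- move=> f g _ IH1 _ IH2 W R V Hi HF w; move: (IH1 W R V Hi HF w); rewrite sat_imp; apply.
  exact: IH2.
- move=> f _ IH W R V Hi HF w u _; exact: IH.
- move=> pi f L1 L2 H1 H2 W R V _ _ w; rewrite sat_iff /= sat_bigAnd; split.
  + move=> H D1 HD1; rewrite sat_bigAnd => D2 HD2 /=; apply: H; [exact/H1 | exact/H2].
  + move=> H D1 D2 HD1 HD2; move: (H D1 (proj2 (H1 D1) HD1)); rewrite sat_bigAnd.
    by apply; apply/H2.
- move=> D1 D2 p W R V _ _ w; by rewrite sat_iff.
- move=> D1 D2 j D p HD Ht Hf W R V _ _ w; rewrite sat_iff /=.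
  rewrite /upd_val /=; case: HD => [[-> <-]|[-> <-]]; rewrite /upd_lit; split; try tauto;
  by move=> [H|[_ [_ H]]] //; move: Hf; rewrite H.
- move=> D1 D2 j D p HD Hf W R V _ _ w; rewrite sat_iff /=.
  rewrite /upd_val /=; case: HD => [[-> <-]|[-> <-]]; rewrite /upd_lit; tauto.
- move=> D1 D2 j D p HD Ht W R V _ _ w; rewrite sat_iff /=.
  have Hf := nontaut_neg Ht.
  rewrite /upd_val /=; case: HD => [[-> <-]|[-> <-]]; rewrite /upd_lit; split=> // [[H|[H _]]];
  by [rewrite H in Hf | rewrite Ht in H].
- move=> D1 D2 i f W R V _ _ w; rewrite sat_iff /=; tauto.
- move=> D1 D2 i f g W R V _ _ w; rewrite sat_iff /=; tauto.
- move=> D1 D2 i f W R V _ _ w; rewrite sat_iff /=; split.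
  + move=> H u Hu; split; [|split]; apply: H; exact: Hu.
  + move=> H [u j] Hu; have Hu' : R w u := Hu.
    case: (H u Hu') => H0 [H1 H2]; by case: j {Hu}; [exact: H0|exact: H1|exact: H2].
- move=> D1 D2 i f g W R V _ _ w; rewrite !sat_imp.
  change (sat (upd_rel R) (upd_val D1 D2 V) (w,i) (FImp f g) ->
    sat (upd_rel R) (upd_val D1 D2 V) (w,i) f -> sat (upd_rel R) (upd_val D1 D2 V) (w,i) g).
  rewrite sat_imp; tauto.
- move=> D1 D2 i f _ IH W R V _ HF w /=; apply: IH; [exact: (inhabits (w, i)) | exact: frame_upd].
Qed.

End Sound.

From Stdlib Require List.

Section Canon.
Variable A : countType.
Variable L : logic.
Implicit Types f g h x y z : form A.

Fixpoint basic (f : form A) : bool :=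
  match f with
  | FTop | FAtom _ => true
  | FNeg g | FBox g => basic g
  | FAnd g h => basic g && basic h
  | _ => false
  end.

Definition cons_ (G : form A -> Prop) :=
  forall l : seq (form A), (forall x, List.In x l -> G x) -> ~ prv L (FNeg (bigAnd l)).

Ltac tcheck := let v := fresh "v" in intro v; simpl; destruct (v 0), (v 1), (v 2), (v 3), (v 4); reflexivity.
Ltac tt l t := exact (@taut A L t l ltac:(tcheck)).

Lemma split_lem z (P : form A -> Prop) (l : seq (form A)) : (forall x, List.In x l -> x = z \/ P x) ->
  exists l', (forall x, List.In x l' -> P x) /\ prv L (FImp (FAnd (bigAnd l') z) (bigAnd l)).
Proof.
elim: l => [|x l IH] Hl.
  exists [::]; split => //; tt [:: z] (PImp (PAnd PTop P0) PTop).
have [l' [H1 H2]] : exists l', (forall x, List.In x l' -> P x) /\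
   prv L (FImp (FAnd (bigAnd l') z) (bigAnd l)).
  by apply: IH => y Hy; apply: Hl; right.
case: (Hl x (or_introl erefl)) => [->|Px].
  exists l'; split => //; apply: r_mp H2.
  tt [:: bigAnd l'; z; bigAnd l] (PImp (PImp (PAnd P0 P1) P2) (PImp (PAnd P0 P1) (PAnd P1 P2))).
exists (x :: l'); split; first by move=> y [<-|Hy] //; apply: H1.
apply: r_mp H2.
tt [:: bigAnd l'; z; bigAnd l; x]
  (PImp (PImp (PAnd P0 P1) P2) (PImp (PAnd (PAnd P3 P0) P1) (PAnd P3 P2))).
Qed.

Lemma split_cons z (P : form A -> Prop) (l : seq (form A)) : (forall x, List.In x l -> x = z \/ P x) ->
  prv L (FNeg (bigAnd l)) ->
  exists l', (forall x, List.In x l' -> P x) /\ prv L (FImp (bigAnd l') (FNeg z)).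
Proof.
move=> /split_lem [l' [H1 H2]] H3; exists l'; split => //; apply: mp2 H2 H3.
tt [:: bigAnd l'; z; bigAnd l] (PImp (PImp (PAnd P0 P1) P2) (PImp (PNeg P2) (PImp P0 (PNeg P1)))).
Qed.

Lemma bigAnd_cat (l1 l2 : seq (form A)) : prv L (FImp (bigAnd (l1 ++ l2)) (FAnd (bigAnd l1) (bigAnd l2))).
Proof.
elim: l1 => [|x l1 IH] /=.
  tt [:: bigAnd l2] (PImp P0 (PAnd PTop P0)).
apply: r_mp IH.
tt [:: bigAnd (l1 ++ l2); bigAnd l1; bigAnd l2; x]
  (PImp (PImp P0 (PAnd P1 P2)) (PImp (PAnd P3 P0) (PAnd (PAnd P3 P1) P2))).
Qed.

Lemma box_list (l : seq (form A)) g : prv L (FImp (bigAnd l) g) -> prv L (FImp (bigAnd (map (@FBox A) l)) (FBox g)).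
Proof.
elim: l g => [|x l IH] g /= H.
  have Hg : prv L g by apply: r_mp H; tt [:: g] (PImp (PImp PTop P0) P0).
  apply: r_mp (r_nec Hg); tt [:: FBox g] (PImp P0 (PImp PTop P0)).
have H1 : prv L (FImp (bigAnd l) (FImp x g)).
  by apply: r_mp H; tt [:: x; bigAnd l; g] (PImp (PImp (PAnd P0 P1) P2) (PImp P1 (PImp P0 P2))).
have H2 := IH _ H1.
apply: mp2 H2 (ax_K _ _ _).
tt [:: bigAnd (map (@FBox A) l); FBox (FImp x g); FBox x; FBox g]
  (PImp (PImp P0 P1) (PImp (PImp P1 (PImp P2 P3)) (PImp (PAnd P2 P0) P3))).
Qed.

Definition mcs (G : form A -> Prop) := cons_ G /\ forall x, basic x -> G x \/ G (FNeg x).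

Lemma mcs_closed G (l : seq (form A)) x : mcs G -> (forall y, List.In y l -> G y) -> basic x ->
  prv L (FImp (bigAnd l) x) -> G x.
Proof.
move=> [HC HM] Hl Hx H; case: (HM x Hx) => // Hn; exfalso.
apply: (HC (FNeg x :: l)); first by move=> y [<-|Hy] //; apply: Hl.
apply: r_mp H; tt [:: bigAnd l; x] (PImp (PImp P0 P1) (PNeg (PAnd (PNeg P1) P0))).
Qed.

Lemma mcs_closed1 G f x : mcs G -> G f -> basic x -> prv L (FImp f x) -> G x.
Proof.
move=> HG Hf Hx H; apply: (mcs_closed (l := [:: f])) => //; first by move=> y [<-|].
apply: r_mp H; tt [:: f; x] (PImp (PImp P0 P1) (PImp (PAnd P0 PTop) P1)).
Qed.

Lemma mcs_neg G x : mcs G -> basic x -> (G (FNeg x) <-> ~ G x).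
Proof.
move=> [HC HM] Hx; split.
- move=> Hn Hp; apply: (HC [:: x; FNeg x]); first by move=> y [<-|[<-|]].
  tt [:: x] (PNeg (PAnd P0 (PAnd (PNeg P0) PTop))).
- by case: (HM x Hx).
Qed.

Lemma mcs_and G x y : mcs G -> basic x -> basic y -> (G (FAnd x y) <-> G x /\ G y).
Proof.
move=> HG Hx Hy; split.
- move=> H; split; apply: (mcs_closed1 HG H) => //.
  + tt [:: x; y] (PImp (PAnd P0 P1) P0).
  + tt [:: x; y] (PImp (PAnd P0 P1) P1).
- move=> [H1 H2]; apply: (mcs_closed (l := [:: x; y])) => //=.
  + by move=> z [<-|[<-|]].
  + by rewrite Hx Hy.
  + tt [:: x; y] (PImp (PAnd P0 (PAnd P1 PTop)) (PAnd P0 P1)).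
Qed.

Lemma mcs_top G : mcs G -> G FTop.
Proof. move=> HG; apply: (mcs_closed (l := [::] : seq (form A))) => //; tt ([::] : seq (form A)) (PImp PTop PTop). Qed.

Definition atoms (n : nat) : seq (form A) :=
  List.flat_map (fun k => if (@choice.unpickle A k) is Some a then [:: FAtom a] else [::]) (List.seq 0 n).

Fixpoint lvl (n : nat) : seq (form A) :=
  match n with
  | 0 => [:: FTop]
  | n.+1 => lvl n ++ atoms n ++ map (@FNeg A) (lvl n) ++
            List.flat_map (fun g => map (FAnd g) (lvl n)) (lvl n) ++ map (@FBox A) (lvl n)
  end.

Lemma lvl_mono n m x : (n <= m)%N -> List.In x (lvl n) -> List.In x (lvl m).
Proof.
elim: m => [|m IH]; first by rewrite leqn0 => /eqP ->.
rewrite leq_eqVlt => /orP [/eqP -> //|]; rewrite ltnS => /IH H /H Hx /=.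
by apply: List.in_or_app; left.
Qed.

Lemma lvl_all f : basic f -> exists n, List.In f (lvl n).
Proof.
elim: f => //=.
- by move=> _; exists 0; left.
- move=> a _; exists (choice.pickle a).+2 => /=; apply: List.in_or_app; right.
  apply: List.in_or_app; left; rewrite /atoms; apply/List.in_flat_map.
  exists (choice.pickle a); split; last by rewrite choice.pickleK; left.
  apply/List.in_seq; split; first by apply/leP.
  apply/ltP; exact: ltnSn.
- move=> g IH /IH [n Hn]; exists n.+1 => /=; do 2 (apply: List.in_or_app; right).
  by apply: List.in_or_app; left; apply: List.in_map.
- move=> g IHg h IHh /andP [/IHg [n Hn] /IHh [m Hm]]; exists (maxn n m).+1 => /=.
  do 3 (apply: List.in_or_app; right); apply: List.in_or_app; left.
  apply/List.in_flat_map; exists g; split; first by apply: lvl_mono Hn; rewrite leq_maxl.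
  by apply: List.in_map; apply: lvl_mono Hm; rewrite leq_maxr.
- move=> g IH /IH [n Hn]; exists n.+1 => /=; do 4 (apply: List.in_or_app; right).
  by apply: List.in_map.
Qed.

Lemma cons_sub (S T : form A -> Prop) : (forall x, T x -> S x) -> cons_ S -> cons_ T.
Proof. by move=> H HS l Hl; apply: HS => x /Hl /H. Qed.

Definition addy (S : form A -> Prop) y : form A -> Prop :=
  fun x => S x \/ (x = y /\ cons_ (fun z => S z \/ z = y)) \/
           (x = FNeg y /\ ~ cons_ (fun z => S z \/ z = y)).

Lemma cons_merge (S : form A -> Prop) y : cons_ S -> ~ cons_ (fun z => S z \/ z = y) ->
  cons_ (fun z => S z \/ z = FNeg y).
Proof.
move=> HS Hy l Hl Hn.
have [l1 [H1 H1']] := split_cons (P := S) (z := FNeg y) (l := l)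
  ltac:(by move=> x /Hl [|->]; [right|left]) Hn.
have [l2 [Hl2 Hn2]] : exists l2, (forall x, List.In x l2 -> S x \/ x = y) /\ prv L (FNeg (bigAnd l2)).
  apply: NNPP => Hne; apply: Hy => l2 Hl2 Hp; apply: Hne; by exists l2.
have [l3 [H3 H3']] := split_cons (P := S) (z := y) (l := l2)
  ltac:(by move=> x /Hl2 [|->]; [right|left]) Hn2.
apply: (HS (l1 ++ l3)).
  by move=> x /List.in_app_iff [/H1|/H3].
apply: r_mp H3'; apply: r_mp H1'; apply: r_mp (bigAnd_cat l1 l3).
tt [:: bigAnd (l1 ++ l3); bigAnd l1; bigAnd l3; y]
 (PImp (PImp P0 (PAnd P1 P2)) (PImp (PImp P1 (PNeg (PNeg P3))) (PImp (PImp P2 (PNeg P3)) (PNeg P0)))).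
Qed.

Lemma cons_addy S y : cons_ S -> cons_ (addy S y).
Proof.
move=> HS; case: (classic (cons_ (fun z => S z \/ z = y))) => Hc.
- apply: (cons_sub _ Hc) => x [H|[[-> _]|[_ H]]]; [by left|by right|by case: (H Hc)].
- apply: (cons_sub _ (cons_merge HS Hc)) => x [H|[[_ H]|[-> _]]]; [by left|by case: (Hc H)|by right].
Qed.

Definition addl (S : form A -> Prop) (l : seq (form A)) := foldl addy S l.

Lemma addl_sub S l x : S x -> addl S l x.
Proof. elim: l S => [|y l IH] S Hx //=; apply: IH; by left. Qed.

Lemma addl_cons S l : cons_ S -> cons_ (addl S l).
Proof. elim: l S => [|y l IH] S HS //=; apply: IH; exact: cons_addy. Qed.

Lemma addl_dec S l y : List.In y l -> addl S l y \/ addl S l (FNeg y).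
Proof.
elim: l S => [|y' l IH] S //= [->|Hy]; last exact: IH.
case: (classic (cons_ (fun z => S z \/ z = y))) => Hc.
- by left; apply: addl_sub; right; left.
- by right; apply: addl_sub; right; right.
Qed.

Fixpoint chain (S : form A -> Prop) (n : nat) : form A -> Prop :=
  match n with 0 => S | n.+1 => addl (chain S n) (lvl n) end.

Lemma chain_mono S n m x : (n <= m)%N -> chain S n x -> chain S m x.
Proof.
elim: m => [|m IH]; first by rewrite leqn0 => /eqP ->.
rewrite leq_eqVlt => /orP [/eqP -> //|]; rewrite ltnS => /IH H /H Hx /=.
exact: addl_sub.
Qed.

Lemma chain_cons S n : cons_ S -> cons_ (chain S n).
Proof. move=> HS; elim: n => //= n IH; exact: addl_cons. Qed.

Lemma lindenbaum S : cons_ S -> exists G, mcs G /\ (forall x, S x -> G x).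
Proof.
move=> HS; exists (fun x => exists n, chain S n x); split; last by move=> x Hx; exists 0.
split.
- move=> l Hl.
  have [n Hn] : exists n, forall x, List.In x l -> chain S n x.
    elim: l Hl => [|y l IH] Hl; first by exists 0.
    have [n Hn] := IH (fun x Hx => Hl x (or_intror Hx)).
    have [m Hm] := Hl y (or_introl erefl).
    exists (maxn n m) => x [<-|Hx].
    + by apply: chain_mono Hm; rewrite leq_maxr.
    + by apply: chain_mono (Hn x Hx); rewrite leq_maxl.
  have HH := @chain_cons S n HS. apply: HH Hn.
- move=> x /lvl_all [n Hn]; case: (addl_dec (chain S n) Hn) => H; [left|right]; by exists n.+1.
Qed.

Definition CW := {G : form A -> Prop | mcs G}.
Definition CR (u v : CW) := forall g, basic g -> sval u (FBox g) -> sval v g.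
Definition CV (p : A) (u : CW) := sval u (FAtom p).

Lemma truth f : basic f -> forall u : CW, sat CR CV u f <-> sval u f.
Proof.
elim: f => //=.
- move=> _ u; split=> // _; exact: mcs_top (svalP u).
- move=> g IH Hg u; rewrite IH // mcs_neg //; exact: svalP.
- move=> g IHg h IHh /andP [Hg Hh] u; rewrite IHg // IHh // mcs_and //; exact: svalP.
- move=> g IH Hg u; split; last by move=> H v Huv; apply/IH => //; apply: Huv.
  move=> H; apply: NNPP => Hn.
  have Hu := svalP u.
  have Hnb : sval u (FNeg (FBox g)) by apply/mcs_neg.
  pose S := fun x => x = FNeg g \/ (basic x /\ sval u (FBox x)).
  have HS : cons_ S.
    move=> l Hl Hp.
    have [l' [H1 H2]] := split_cons (P := fun x => basic x /\ sval u (FBox x)) (z := FNeg g) Hl Hp.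
    have H3 : prv L (FImp (bigAnd l') g).
      apply: r_mp H2; tt [:: bigAnd l'; g] (PImp (PImp P0 (PNeg (PNeg P1))) (PImp P0 P1)).
    apply: Hn; apply: (mcs_closed Hu _ _ (box_list H3)) => //.
    move=> y /List.in_map_iff [x [<- Hx]]; exact: (proj2 (H1 x Hx)).
  have [G [HG HSG]] := lindenbaum HS.
  have Huv : CR u (exist _ G HG) by move=> x Hx Hbx; apply: HSG; right.
  have := H _ Huv; rewrite IH //= => HGg.
  by move: (HSG (FNeg g) (or_introl erefl)); rewrite mcs_neg.
Qed.

Lemma canon_refl : hasT L -> reflexive_R CR.
Proof. move=> HT u g Hg H; apply: mcs_closed1 (svalP u) H Hg (ax_T _ HT). Qed.

Lemma canon_trans : has4 L -> transitive_R CR.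
Proof.
move=> H4 u v w Huv Hvw g Hg H; apply: Hvw => //; apply: Huv => //.
exact: mcs_closed1 (svalP u) H _ (ax_4 _ H4).
Qed.

Lemma canon_5 (u v : CW) g : has5 L -> CR u v -> basic g -> sval v (FBox g) -> sval u (FBox g).
Proof.
move=> H5 Huv Hg Hv; apply: NNPP => Hn.
have Hu := svalP u.
have H1 : sval u (FNeg (FBox g)) by apply/mcs_neg.
have H2 : sval u (FBox (FNeg (FBox g))) by apply: mcs_closed1 Hu H1 _ (ax_5 _ H5).
by have := Huv (FNeg (FBox g)) Hg H2; rewrite mcs_neg //; last exact: svalP.
Qed.

Lemma canon_eucl : has5 L -> euclidean_R CR.
Proof. move=> H5 u v w Huv Huw g Hg Hv; apply: Huw => //; exact: canon_5 Huv Hg Hv. Qed.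

Lemma canon_sym : hasT L -> has5 L -> symmetric_R CR.
Proof.
move=> HT H5 u v Huv g Hg Hv; apply: canon_refl => //; exact: canon_5 Huv Hg Hv.
Qed.

Lemma canon_frame : frame L CR.
Proof.
case HL: L => /=.
- by [].
- by apply: canon_refl; rewrite HL.
- by apply: canon_trans; rewrite HL.
- by apply: canon_eucl; rewrite HL.
- by split; [apply: canon_refl|apply: canon_trans]; rewrite HL.
- by split; [|split]; [apply: canon_refl|apply: canon_sym|apply: canon_trans]; rewrite HL.
Qed.

Lemma completeness_basic f : basic f -> valid L f -> prv L f.
Proof.
move=> Hf Hv; apply: NNPP => Hn.
have HS : cons_ (fun x => x = FNeg f).
  move=> l Hl Hp.
  have [l' [H1 H2]] := split_cons (P := fun _ => False) (z := FNeg f)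
     (fun x Hx => or_introl (Hl x Hx)) Hp.
  case: l' H1 H2 => [_ H2|x l' H1 _]; last by apply: (H1 x); left.
  apply: Hn; apply: r_mp H2; tt [:: f] (PImp (PImp PTop (PNeg (PNeg P0))) P0).
have [G [HG HSG]] := lindenbaum HS.
have := Hv CW CR CV (inhabits (exist _ G HG)) canon_frame (exist _ G HG).
rewrite truth //= => HGf.
by move: (HSG _ erefl); rewrite mcs_neg.
Qed.

End Canon.

Section Fin.
Variable A : countType.
Local Open Scope fset_scope.

Fixpoint pvars (pi : pf A) : seq A :=
  match pi with
  | PTop => [::]
  | PVar x => [:: x]
  | PNeg b => pvars b
  | PAnd b c => pvars b ++ pvars c
  end.

Lemma peval_ext (v v' : A -> bool) pi : (forall x, x \in pvars pi -> v x = v' x) ->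
  peval v pi = peval v' pi.
Proof.
elim: pi => [|x|b IH|b IHb c IHc] //= H.
- by apply: H; rewrite mem_head.
- by rewrite IH.
- rewrite IHb ?IHc // => x Hx; apply: H; rewrite mem_cat Hx ?orbT //.
Qed.

Lemma nontaut_pair (D : clause A) (l l' : A * bool) : l \in val D -> l' \in val D ->
  l'.1 = l.1 -> l' = l.
Proof.
case: l => a b; case: l' => a' b' H H' /= E; subst a'.
case: (eqVneq b' b) => [-> //|Nb].
move: H H' Nb; case: b; case: b' => // H H' _; by rewrite (negbTE (nontaut_neg H)) in H'.
Qed.

Lemma Cset_vars pi (D : clause A) l : Cset pi D -> l \in val D -> l.1 \in pvars pi.
Proof.
move=> [Hent Hmin] Hl; apply: contraT => Hq.
exfalso; apply: (Hmin (val D `\ l)); first exact: fproperD1.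
move=> v Hv; have [l' Hl' Hlv] := Hent v Hv.
case: (eqVneq l' l) => [El'|Nl']; last by exists l' => //; apply/fsetD1P.
subst l'.
pose v' := fun x => if x == l.1 then ~~ v l.1 else v x.
have Hv' : peval v' pi.
  suff -> : peval v' pi = peval v pi by [].
  apply: peval_ext => x Hx; rewrite /v'; case: eqP => // Ex.
  by move: Hq; rewrite -Ex Hx.
have [l'' Hl'' Hlv''] := Hent v' Hv'.
case: (eqVneq l'' l) => [E|N].
  by move: Hlv Hlv''; rewrite E /litv /v' eqxx; case: (v l.1); case: (l.2).
case: (eqVneq l''.1 l.1) => [E1|N1].
  by move: N; rewrite (nontaut_pair Hl Hl'' E1) eqxx.
exists l''; first by apply/fsetD1P.
by move: Hlv''; rewrite /litv /v' (negbTE N1).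
Qed.

Fixpoint fsubs (s : seq (A * bool)) : seq {fset (A * bool)} :=
  match s with
  | [::] => [:: fset0]
  | x :: s => fsubs s ++ [seq x |` X | X <- fsubs s]
  end.

Lemma fsubsP s (X : {fset (A * bool)}) : (forall y, y \in X -> y \in s) -> X \in fsubs s.
Proof.
elim: s X => [|x s IH] X H /=.
  have -> : X = fset0 by apply/fsetP => y; rewrite in_fset0; apply/negbTE/negP => /H.
  by rewrite mem_head.
rewrite mem_cat; case Hx: (x \in X).
- apply/orP; right; rewrite -(fsetD1K Hx); apply: map_f; apply: IH => y /fsetD1P [Ny Hy].
  by move: (H y Hy); rewrite in_cons (negbTE Ny).
- apply/orP; left; apply: IH => y Hy; move: (H y Hy); rewrite in_cons.
  by case: eqP => // Ey; move: Hx; rewrite -Ey Hy.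
Qed.

Lemma filterP (T : eqType) (P : T -> Prop) (l : seq T) :
  exists l' : seq T, forall x, x \in l' <-> x \in l /\ P x.
Proof.
elim: l => [|y l [l' IH]]; first by exists [::] => x; split => //; case.
case: (classic (P y)) => Py.
- exists (y :: l') => x; rewrite !in_cons; case: eqP => [->|_] /=; first by split=> // _; split.
  exact: IH.
- exists l' => x; rewrite in_cons; case: eqP => [->|_] /=; last exact: IH.
  rewrite IH; tauto.
Qed.

Lemma Cset_fin (pi : pf A) : exists L1 : seq (clause A), forall D, D \in L1 <-> Cset pi D.
Proof.
pose vs := pvars pi.
pose lits := [seq (x, true) | x <- vs] ++ [seq (x, false) | x <- vs].
have [l' Hl'] := filterP (Cset pi) (pmap insub (fsubs lits) : seq (clause A)).
exists l' => D; rewrite Hl'; split; first by case.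
move=> HD; split => //; rewrite mem_pmap_sub; apply: fsubsP => [[y b]] Hy.
have := Cset_vars HD Hy; rewrite /= => Hyv.
rewrite /lits mem_cat; case: b {Hy}; apply/orP; [left|right]; exact: (map_f (fun x => (x, _)) Hyv).
Qed.

End Fin.

Section Reduce.
Variable A : countType.
Variable L : logic.
Implicit Types f g h : form A.

Ltac tcheck := let v := fresh "v" in intro v; simpl; destruct (v 0), (v 1), (v 2), (v 3), (v 4); reflexivity.
Ltac tt l t := exact (@taut A L t l ltac:(tcheck)).

Lemma upd_basic g : basic g -> forall D1 D2 i, exists b, basic b /\ prv L (FIff (FUpd D1 D2 i g) b).
Proof.
elim: g => //=.
- move=> _ D1 D2 i; exists FTop; split => //.
  have H : prv L (FUpd D1 D2 i FTop) by apply: r8; tt ([::] : seq (form A)) (PTop : pf nat).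
  apply: r_mp H; tt [:: FUpd D1 D2 i FTop] (PImp P0 (PIff P0 PTop)).
- move=> p _ D1 D2 i.
  have key : forall j D, (j = U1 /\ D = D1) \/ (j = U2 /\ D = D2) ->
      exists b, basic b /\ prv L (FIff (FUpd D1 D2 j (FAtom p)) b).
    move=> j D HD.
    case Hf: ((p, false) \in val D); first by exists FTop; split => //; exact: ax3_top HD Hf.
    case Ht: ((p, true) \in val D); first by exists FBot; split => //; exact: ax3_bot HD Ht.
    exists (FAtom p); split => //; apply: ax3_keep HD _ _; by rewrite ?Hf ?Ht.
  case: i.
  + by exists (FAtom p); split => //; exact: ax2.
  + exact: (key U1 D1 (or_introl (conj erefl erefl))).
  + exact: (key U2 D2 (or_intror (conj erefl erefl))).
- move=> g IH Hg D1 D2 i; have [b [Hb H]] := IH Hg D1 D2 i.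
  exists (FNeg b); split => //; apply: iff_trans (ax4 _ _ _ _ _) (iff_neg H).
- move=> g IHg h IHh /andP [Hg Hh] D1 D2 i.
  have [b [Hb H]] := IHg Hg D1 D2 i; have [c [Hc H']] := IHh Hh D1 D2 i.
  exists (FAnd b c); split; first by rewrite /= Hb Hc.
  apply: iff_trans (ax5 _ _ _ _ _ _) (iff_and H H').
- move=> g IH Hg D1 D2 i.
  have [b0 [Hb0 H0]] := IH Hg D1 D2 U0.
  have [b1 [Hb1 H1]] := IH Hg D1 D2 U1.
  have [b2 [Hb2 H2]] := IH Hg D1 D2 U2.
  exists (FBox (FAnd b0 (FAnd b1 b2))); split; first by rewrite /= Hb0 Hb1 Hb2.
  apply: iff_trans (ax6 _ _ _ _ _) (iff_box (iff_and H0 (iff_and H1 H2))).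
Qed.

Lemma bigAnd_basic (l : seq (form A)) :
  (forall x, List.In x l -> exists b, basic b /\ prv L (FIff x b)) ->
  exists b, basic b /\ prv L (FIff (bigAnd l) b).
Proof.
elim: l => [|x l IH] H /=.
  by exists FTop; split => //; apply: iff_refl.
have [b [Hb Hx]] := H x (or_introl erefl).
have [c [Hc Hl]] := IH (fun y Hy => H y (or_intror Hy)).
exists (FAnd b c); split; first by rewrite /= Hb Hc.
exact: iff_and.
Qed.

Lemma reduce f : exists b, basic b /\ prv L (FIff f b).
Proof.
elim: f.
- by exists FTop; split => //; apply: iff_refl.
- by move=> p; exists (FAtom p); split => //; apply: iff_refl.
- move=> g [b [Hb H]]; exists (FNeg b); split => //; exact: iff_neg.
- move=> g [b [Hb H]] h [c [Hc H']]; exists (FAnd b c); split; first by rewrite /= Hb Hc.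
  exact: iff_and.
- move=> g [b [Hb H]]; exists (FBox b); split => //; exact: iff_box.
- move=> pi g [b [Hb H]].
  have [L1 H1] := Cset_fin pi; have [L2 H2] := Cset_fin (PNeg pi).
  have Hax := ax1 L g H1 H2.
  have [c [Hc Hbig]] : exists c, basic c /\ prv L (FIff
      (bigAnd [seq bigAnd [seq FUpd D1 D2 U0 g | D2 <- L2] | D1 <- L1]) c).
    apply: bigAnd_basic => x /List.in_map_iff [D1 [<- _]].
    apply: bigAnd_basic => y /List.in_map_iff [D2 [<- _]].
    have [d [Hd Hu]] := upd_basic Hb D1 D2 U0.
    exists d; split => //; exact: iff_trans (iff_upd _ _ _ H) Hu.
  exists c; split => //; exact: iff_trans Hax Hbig.
- move=> D1 D2 i g [b [Hb H]].
  have [d [Hd Hu]] := upd_basic Hb D1 D2 i.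
  exists d; split => //; exact: iff_trans (iff_upd _ _ _ H) Hu.
Qed.

End Reduce.

Theorem corollary2 (A : countType) (a0 : A) (L : logic) (f : form A) :
  no_upd f -> (valid L f <-> prv L f).
Proof.
move=> _; split; last exact: soundness.
move=> Hv; have [b [Hb Hfb]] := reduce L f.
have Hvb : valid L b.
  move=> W R V Hi HF w; have Hs := soundness Hfb; have := Hs W R V Hi HF w; rewrite sat_iff => -[H _]; apply: H.
  exact: Hv.
exact: r_mp (iff_l (iff_sym Hfb)) (completeness_basic Hb Hvb).
Qed.
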